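(* Let $\sigma:\mathbb{R}\to\mathbb{R}$ be a differentiable activation function for which there is a constant $c_\sigma>0$ such that for any $L'$-Lipschitz $h:\mathbb{R}\to\mathbb{R}$ that is constant outside $[-R,R]$ and any $\delta>0$, there exist reals $a,(\alpha_i,\beta_i,\gamma_i)_{i=1}^m$ with $m\le c_\sigma RL'/\delta$ and $\sup_{x\in\mathbb{R}}|a+\sum_{i=1}^m\alpha_i\sigma(\beta_ix+\gamma_i)-h(x)|\le\delta$. Then: 1. For any $M>0$ and $\delta>0$ there exists a 2-layer neural net $g:\mathbb{R}^2\to\mathbb{R}$ of size $m\le 8c_\sigma M^2/\delta+1$ such that $\sup_{x,y\in[-M,M]}|g(x,y)-xy|\le\delta$. 2. For any $0<a\le b<\infty$ and $\delta>0$ there exists a 2-layer neural net $q:\mathbb{R}\to\mathbb{R}$ of size $m\le c_\sigma\frac{b}{a^2\delta}+1$ such that $\sup_{x\in[a,b]}|q(x)-1/x|\le\delta$.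
   Context: A 2-layer neural net with activation $\sigma$ of size $m+1$ is a function of the form $x\mapsto a+\sum_{i=1}^m\alpha_i\sigma(w_i^\top x+\gamma_i)$ (the constant $a$ counting as one node). *)

(* Defs.v *)
From Stdlib Require Export Reals List.
Export ListNotations.
Open Scope R_scope.

(* Its size is (length ps) + 1 (the constant a counting as one node). *)
Definition net1 (sigma : R -> R) (a : R) (ps : list (R * R * R)) (x : R) : R :=
  a + fold_right (fun p acc => let '(al, be, ga) := p in
                               al * sigma (be * x + ga) + acc) 0 ps.

Definition net2 (sigma : R -> R) (a : R) (ps : list (R * R * R * R)) (x y : R) : R :=
  a + fold_right (fun p acc => let '(al, w1, w2, ga) := p in
                               al * sigma (w1 * x + w2 * y + ga) + acc) 0 ps.

Definition lipschitz (L : R) (h : R -> R) : Prop :=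
  forall x y, Rabs (h x - h y) <= L * Rabs (x - y).

Definition const_outside (Rr : R) (h : R -> R) : Prop :=
  (forall x, x <= - Rr -> h x = h (- Rr)) /\ (forall x, Rr <= x -> h x = h Rr).

Definition approx_property (sigma : R -> R) (c : R) : Prop :=
  forall (L Rr : R) (h : R -> R), 0 < Rr -> 0 <= L ->
    lipschitz L h -> const_outside Rr h ->
    forall delta, 0 < delta ->
      exists (a : R) (ps : list (R * R * R)),
        INR (length ps) <= c * Rr * L / delta /\
        forall x, Rabs (net1 sigma a ps x - h x) <= delta.

(* Main.v *)
Require Import Defs.
From Stdlib Require Import Reals List Lra.
Open Scope R_scope.

Definition clamp (lo hi t : R) : R := Rmax lo (Rmin t hi).

Lemma clamp_lip lo hi s t : lo <= hi -> Rabs (clamp lo hi s - clamp lo hi t) <= Rabs (s - t).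
Proof.
  intros H; unfold clamp, Rmax, Rmin.
  repeat destruct Rle_dec; unfold Rabs; repeat destruct Rcase_abs; lra.
Qed.

Lemma clamp_bnd lo hi t : lo <= hi -> lo <= clamp lo hi t <= hi.
Proof. intros H; unfold clamp, Rmax, Rmin; repeat destruct Rle_dec; lra. Qed.

Lemma clamp_id lo hi t : lo <= t <= hi -> clamp lo hi t = t.
Proof. intros H; unfold clamp, Rmax, Rmin; repeat destruct Rle_dec; lra. Qed.

Lemma clamp_lo lo hi t : lo <= hi -> t <= lo -> clamp lo hi t = lo.
Proof. intros H H'; unfold clamp, Rmax, Rmin; repeat destruct Rle_dec; lra. Qed.

Lemma clamp_hi lo hi t : lo <= hi -> hi <= t -> clamp lo hi t = hi.
Proof. intros H H'; unfold clamp, Rmax, Rmin; repeat destruct Rle_dec; lra. Qed.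

Definition F2 (sigma : R -> R) x y := (fun (p : R * R * R * R) acc => let '(al, w1, w2, ga) := p in
                               al * sigma (w1 * x + w2 * y + ga) + acc).

Lemma fold_m1 sigma x y ps acc :
  fold_right (F2 sigma x y) acc (map (fun p : R * R * R => let '(al, be, ga) := p in (al, be, be, ga)) ps)
  = net1 sigma 0 ps (x + y) + acc.
Proof.
  induction ps as [|[[al be] ga] ps IH]; simpl.
  - unfold net1; simpl; ring.
  - rewrite IH. unfold net1; simpl.
    replace (be * x + be * y + ga) with (be * (x + y) + ga) by ring. ring.
Qed.

Lemma fold_m2 sigma x y ps acc :
  fold_right (F2 sigma x y) acc (map (fun p : R * R * R => let '(al, be, ga) := p in (- al, be, - be, ga)) ps)
  = - net1 sigma 0 ps (x - y) + acc.
Proof.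
  induction ps as [|[[al be] ga] ps IH]; simpl.
  - unfold net1; simpl; ring.
  - rewrite IH. unfold net1; simpl.
    replace (be * x + - be * y + ga) with (be * (x - y) + ga) by ring. ring.
Qed.

Lemma net1_a sigma a ps t : net1 sigma a ps t = a + net1 sigma 0 ps t.
Proof. unfold net1; ring. Qed.

Theorem lemma8 (sigma : R -> R) (c : R) :
  derivable sigma -> 0 < c -> approx_property sigma c ->
  (forall M delta, 0 < M -> 0 < delta ->
     exists (a : R) (ps : list (R * R * R * R)),
       INR (length ps) + 1 <= 8 * c * M ^ 2 / delta + 1 /\
       forall x y, -M <= x <= M -> -M <= y <= M ->
         Rabs (net2 sigma a ps x y - x * y) <= delta)
  /\
  (forall a b delta, 0 < a -> a <= b -> 0 < delta ->
     exists (a0 : R) (ps : list (R * R * R)),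
       INR (length ps) + 1 <= c * b / (a ^ 2 * delta) + 1 /\
       forall x, a <= x <= b -> Rabs (net1 sigma a0 ps x - 1 / x) <= delta).
Proof.
  intros _ Hc Happ. split.
  - intros M delta HM Hd.
    set (h := fun t => clamp (-(2*M)) (2*M) t ^ 2 / 4).
    assert (Hlo : -(2*M) <= 2*M) by lra.
    assert (Hl : lipschitz M h).
    { intros s t. unfold h.
      pose proof (clamp_lip _ _ s t Hlo) as L1.
      pose proof (clamp_bnd _ _ s Hlo) as B1.
      pose proof (clamp_bnd _ _ t Hlo) as B2.
      set (u := clamp (-(2*M)) (2*M) s) in *.
      set (v := clamp (-(2*M)) (2*M) t) in *.
      replace (u ^ 2 / 4 - v ^ 2 / 4) with ((u - v) * ((u + v) / 4)) by field.
      rewrite Rabs_mult.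
      assert (Rabs ((u + v) / 4) <= M) by (apply Rabs_le; lra).
      rewrite Rmult_comm.
      apply Rmult_le_compat; auto using Rabs_pos. }
    assert (Hc' : const_outside (2*M) h).
    { split; intros x Hx; unfold h.
      - rewrite (clamp_lo _ _ x Hlo), (clamp_lo _ _ (-(2*M)) Hlo); lra.
      - rewrite (clamp_hi _ _ x Hlo), (clamp_hi _ _ (2*M) Hlo); lra. }
    destruct (Happ M (2*M) h ltac:(lra) ltac:(lra) Hl Hc' (delta/2) ltac:(lra))
      as [a1 [ps [Hlen Happr]]].
    exists (a1 - a1).
    exists (map (fun p : R * R * R => let '(al, be, ga) := p in (al, be, be, ga)) ps ++
            map (fun p : R * R * R => let '(al, be, ga) := p in (- al, be, - be, ga)) ps).
    split.
    + rewrite app_length, !map_length, plus_INR.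
      replace (8 * c * M ^ 2 / delta) with (2 * (c * (2 * M) * M / (delta / 2))) by (field; lra).
      lra.
    + intros x y Hx Hy.
      unfold net2. fold (F2 sigma x y). rewrite fold_right_app, fold_m2, fold_m1.
      pose proof (Happr (x + y)) as E1. pose proof (Happr (x - y)) as E2.
      rewrite net1_a in E1, E2.
      unfold h in E1, E2. rewrite !clamp_id in E1, E2 by lra.
      revert E1 E2. unfold Rabs; repeat destruct Rcase_abs; intros; nra.
  - intros a b delta Ha Hab Hd.
    set (h := fun t => 1 / clamp a b t).
    assert (Hl : lipschitz (1 / a ^ 2) h).
    { intros s t. unfold h.
      pose proof (clamp_lip _ _ s t Hab) as L1.
      pose proof (clamp_bnd _ _ s Hab) as B1.
      pose proof (clamp_bnd _ _ t Hab) as B2.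
      set (u := clamp a b s) in *.
      set (v := clamp a b t) in *.
      replace (1 / u - 1 / v) with ((v - u) * / (u * v)) by (field; lra).
      rewrite Rabs_mult, (Rabs_right (/ (u * v))).
      2: { apply Rle_ge, Rlt_le, Rinv_0_lt_compat; nra. }
      rewrite Rabs_minus_sym, Rmult_comm.
      unfold Rdiv; rewrite Rmult_1_l.
      apply Rmult_le_compat; auto using Rabs_pos.
      - apply Rlt_le, Rinv_0_lt_compat; nra.
      - apply Rinv_le_contravar; [nra|]. simpl; nra. }
    assert (Hc' : const_outside b h).
    { split; intros x Hx; unfold h.
      - rewrite !(clamp_lo _ _ _ Hab); lra.
      - rewrite !(clamp_hi _ _ _ Hab); lra. }
    destruct (Happ (1 / a ^ 2) b h ltac:(lra) ltac:(apply Rlt_le, Rdiv_lt_0_compat; [lra| apply pow_lt; lra]) Hl Hc' delta Hd)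
      as [a0 [ps [Hlen Happr]]].
    exists a0, ps. split.
    + replace (c * b / (a ^ 2 * delta)) with (c * b * (1 / a ^ 2) / delta) by (field; lra).
      lra.
    + intros x Hx. pose proof (Happr x) as E. unfold h in E.
      rewrite clamp_id in E by lra. exact E.
Qed.
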